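(* (i) For any $u,v\in\mathcal{L}PSH^*(\mathbb{C}^n)$, \[ c_\infty(u+v)\le c_\infty(\max\{u,v\})\le\min\{c_\infty(u),c_\infty(v)\}. \] (ii) If $u\in\mathcal{L}PSH(\mathbb{C}^n)$ and $v\in\mathcal{L}PSH^*(\mathbb{C}^n)$ satisfy $\limsup_{|z|\to\infty}\frac{u(z)}{v(z)}\le\sigma<\infty$, then $c_\infty(u)\ge\sigma^{-1}c_\infty(v)$.
   Context: $\mathcal{L}PSH(\mathbb{C}^n)$: plurisubharmonic $u$ on $\mathbb{C}^n$ with $\limsup_{|z|\to\infty}u(z)/\log|z|<\infty$; $\mathcal{L}PSH^*(\mathbb{C}^n)$: those with $u(z)\to+\infty$ as $|z|\to\infty$. $g\in L^2(\infty)$ means $\int_{\mathbb{C}^n\setminus K}|g|^2d\lambda<\infty$ for some compact $K$; $c_\infty(u)=\inf\{c>0:e^{-cu}\in L^2(\infty)\}$ (with $\inf\emptyset=+\infty$). *)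

(* Defs.v *)
From HB Require Import structures.
From mathcomp Require Import all_boot all_order all_algebra.
From mathcomp Require Import all_classical all_reals all_analysis.
Import Order.TTheory GRing.Theory Num.Theory.
Import numFieldNormedType.Exports.
Set Implicit Arguments. Unset Strict Implicit. Unset Printing Implicit Defensive.
Local Open Scope classical_set_scope.
Local Open Scope ring_scope.

Section Defs.
Variables (R : realType) (n : nat).

(* A point z = x + i y of C^n, represented as the pair (x, y) of real row vectors;
   it carries the product (= Euclidean) topology of R^(2n). *)
Definition Cn : Type := ('rV[R]_n * 'rV[R]_n)%type.

Definition cnorm (z : Cn) : R :=
  Num.sqrt (\sum_(j < n) (z.1 ord0 j ^+ 2 + z.2 ord0 j ^+ 2)).

(* the point a + e^{i t} b of the complex line through a in direction b *)
Definition circ_pt (a b : Cn) (t : R) : Cn :=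
  (a.1 + (cos t *: b.1 - sin t *: b.2), a.2 + (cos t *: b.2 + sin t *: b.1)).

Definition usc (u : Cn -> \bar R) : Prop :=
  forall c : R, open [set z : Cn | (u z < c%:E)%E].

(* plurisubharmonic on C^n: usc, values in [-oo,+oo), not identically -oo,
   and the restriction to every complex line satisfies the sub-mean-value
   inequality on every circle (i.e. is subharmonic or identically -oo). *)
Definition psh (u : Cn -> \bar R) : Prop :=
  [/\ usc u,
      (forall z, (u z < +oo)%E),
      (exists z, (-oo < u z)%E) &
      (forall a b : Cn,
        (u a <= ((2 * pi)^-1)%:E *
           \int[lebesgue_measure]_(t in `[0%R, (2 * pi)%R]) u (circ_pt a b t))%E)].

(* the Lelong class LPSH(C^n): limsup_{|z|->oo} u(z)/log|z| < oo *)
Definition LPSH (u : Cn -> \bar R) : Prop :=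
  psh u /\ exists C r : R, forall z, r < cnorm z -> (u z <= (C * ln (cnorm z))%:E)%E.

Definition LPSHstar (u : Cn -> \bar R) : Prop :=
  LPSH u /\ forall M : R, exists r : R, forall z, r < cnorm z -> (M%:E < u z)%E.

Fixpoint iint (m : nat) (f : (nat -> R) -> \bar R) : \bar R :=
  match m with
  | 0 => f (fun _ => 0)
  | m'.+1 => (\int[lebesgue_measure]_t
                 iint m' (fun x => f (fun k => if k is k'.+1 then x k' else t)))%E
  end.

(* integral with respect to Lebesgue measure on C^n = R^(2n) *)
Definition cn_integral (F : Cn -> \bar R) : \bar R :=
  iint (2 * n) (fun x => F (\row_(j < n) x (val j), \row_(j < n) x (n + val j)%N)).

Definition L2inf (g : Cn -> \bar R) : Prop :=
  exists K : set Cn, compact K /\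
    (cn_integral (fun z => (\1_(~` K) z)%:E * (`|g z| * `|g z|)) < +oo)%E.

(* c_oo(u) = inf { c > 0 : e^{-c u} in L^2(oo) }, inf of the empty set = +oo *)
Definition c_infty (u : Cn -> \bar R) : \bar R :=
  ereal_inf [set c%:E | c in [set c : R | 0 < c /\
                 L2inf (fun z => expeR (- (c%:E * u z)))%E]].

End Defs.

(* Main.v *)
Require Import Defs.
From HB Require Import structures.
From mathcomp Require Import all_boot all_order all_algebra.
From mathcomp Require Import all_classical all_reals all_analysis.
Import Order.TTheory GRing.Theory Num.Theory.
Import numFieldNormedType.Exports.
Local Open Scope classical_set_scope.
Local Open Scope ring_scope.

Section Aux.
Variable (R : realType).

Lemma int_mono d (T : measurableType d) (mu : {measure set T -> \bar R})
  (f g : T -> \bar R) : (forall x, (0 <= f x)%E) -> (forall x, (f x <= g x)%E) ->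
  (\int[mu]_x f x <= \int[mu]_x g x)%E.
Proof.
move=> f0 fg.
have g0 x : (0 <= g x)%E by apply: le_trans (fg x).
rewrite !ge0_integralE //= !patch_setT.
apply: ereal_sup_le => _ [h hf <-]; exists h => //= x.
exact: le_trans (hf x) (fg x).
Qed.

Lemma iint_ge0 m (f : (nat -> R) -> \bar R) : (forall x, (0 <= f x)%E) ->
  (0 <= iint m f)%E.
Proof.
elim: m f => [|m IH] f f0 /=; first exact: f0.
by apply: integral_ge0 => t _; apply: IH => x.
Qed.

Lemma iint_le m (f g : (nat -> R) -> \bar R) : (forall x, (0 <= f x)%E) ->
  (forall x, (f x <= g x)%E) -> (iint m f <= iint m g)%E.
Proof.
elim: m f g => [|m IH] f g f0 fg /=; first exact: fg.
apply: int_mono => t; first by apply: iint_ge0.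
by apply: IH.
Qed.

Variable n : nat.

Lemma cn_le (F G : Cn R n -> \bar R) : (forall z, (0 <= F z)%E) ->
  (forall z, (F z <= G z)%E) -> (cn_integral F <= cn_integral G)%E.
Proof. by move=> F0 FG; apply: iint_le. Qed.

Lemma L2inf_le (g h : Cn R n -> \bar R) (K0 : set (Cn R n)) : compact K0 ->
  (forall z, ~ K0 z -> (`|g z| <= `|h z|)%E) -> L2inf h -> L2inf g.
Proof.
move=> cK0 gh [K [cK Kfin]]; exists (K `|` K0); split; first exact: compactU.
apply: le_lt_trans Kfin; apply: cn_le => z.
  by apply: mule_ge0; [rewrite /indic lee_fin; case: (_ \in _) | apply: mule_ge0].
rewrite /indic; have [KK0|nKK0] := boolP (z \in ~` (K `|` K0)).
  move: KK0; rewrite in_setC in_setU negb_or => /andP[nK nK0].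
  rewrite in_setC nK !mul1e; apply: lee_pmul => //.
    by apply: gh => /mem_set; rewrite (negbTE nK0).
  by apply: gh => /mem_set; rewrite (negbTE nK0).
rewrite mul0e; apply: mule_ge0; first by rewrite lee_fin; case: (_ \in _).
by apply: mule_ge0.
Qed.

Lemma coord_le_cnorm (z : Cn R n) i :
  `|z.1 ord0 i| <= cnorm z /\ `|z.2 ord0 i| <= cnorm z.
Proof.
have S0 : 0 <= \sum_(j < n) (z.1 ord0 j ^+ 2 + z.2 ord0 j ^+ 2).
  by apply: sumr_ge0 => j _; apply: addr_ge0; apply: sqr_ge0.
have Hi : z.1 ord0 i ^+ 2 + z.2 ord0 i ^+ 2 <=
    \sum_(j < n) (z.1 ord0 j ^+ 2 + z.2 ord0 j ^+ 2).
  rewrite (bigD1 i) //= lerDl; apply: sumr_ge0 => j _.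
  by apply: addr_ge0; apply: sqr_ge0.
rewrite /cnorm -!sqrtr_sqr !ler_sqrt //; split; apply: le_trans Hi.
  by rewrite lerDl sqr_ge0.
by rewrite lerDr sqr_ge0.
Qed.

Definition box (r : R) : set (Cn R n) :=
  [set v : 'rV[R]_n | forall i, `[- r, r]%classic (v ord0 i)] `*`
  [set v : 'rV[R]_n | forall i, `[- r, r]%classic (v ord0 i)].

Lemma box_compact r : compact (box r).
Proof.
rewrite /box; apply: compact_setX; apply: (@rV_compact _ _ (fun i => `[- r, r]%classic)) => i; apply: segment_compact.
Qed.

Lemma not_box r z : ~ box r z -> r < cnorm z.
Proof.
move=> nb; case: (ltrP r (cnorm z)) => // hle; exfalso; apply: nb.
split => i /=; rewrite in_itv /= -ler_norml; apply: le_trans hle.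
  exact: (coord_le_cnorm z i).1.
exact: (coord_le_cnorm z i).2.
Qed.

End Aux.

Theorem proposition5p1 (R : realType) (n : nat) :
  (forall u v : Cn R n -> \bar R, LPSHstar u -> LPSHstar v ->
     (c_infty (fun z => (u z + v z)%E) <= c_infty (fun z => maxe (u z) (v z)))%E /\
     (c_infty (fun z => maxe (u z) (v z)) <= mine (c_infty u) (c_infty v))%E)
  /\
  (forall (u v : Cn R n -> \bar R) (sigma : R),
     0 < sigma -> LPSH u -> LPSHstar v ->
     (forall e : R, 0 < e -> exists r : R, forall z : Cn R n, r < cnorm z ->
        (u z * ((fine (v z))^-1)%:E <= (sigma + e)%:E)%E) ->
     ((sigma^-1)%:E * c_infty v <= c_infty u)%E).
Proof.
split.
  move=> u v [[pu Lu] Su] [[pv Lv] Sv]; split.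
    apply: ereal_inf_le_tmp; apply: image_subset => c [c0 Lc]; split => //.
    have [ru Hu] := Su 0%R; have [rv Hv] := Sv 0%R.
    apply: (@L2inf_le _ _ _ _ _ (@box_compact _ _ (Num.max ru rv))) Lc => z /not_box.
    rewrite gt_max => /andP[/Hu hu /Hv hv].
    rewrite !gee0_abs ?expeR_ge0 // lee_expeR leeN2.
    apply: lee_wpmul2l; first by rewrite lee_fin ltW.
    rewrite ge_max; apply/andP; split; [apply: leeDl | apply: leeDr]; exact: ltW.
  rewrite le_min; apply/andP; split; apply: ereal_inf_le_tmp; apply: image_subset
    => c [c0 Lc]; split => //; apply: (@L2inf_le _ _ _ _ _ compact0) Lc => z _;
    rewrite !gee0_abs ?expeR_ge0 // lee_expeR leeN2;
    (apply: lee_wpmul2l; first by rewrite lee_fin ltW).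
    by rewrite le_max lexx.
  by rewrite le_max lexx orbT.
move=> u v sigma s0 [[_ ult _ _] _] [[[_ vlt _ _] _] Sv] hyp.
apply: le_ereal_inf_tmp => _ [c [c0 Lc] <-].
have key : forall e : R, 0 < e -> (c_infty v <= (c * (sigma + e))%:E)%E.
  move=> e e0; apply: ereal_inf_lbound; exists (c * (sigma + e)) => //.
  split; first by apply: mulr_gt0 => //; apply: addr_gt0.
  have [r1 H1] := hyp e e0; have [r2 H2] := Sv 0%R.
  apply: (@L2inf_le _ _ _ _ _ (@box_compact _ _ (Num.max r1 r2))) Lc => z /not_box.
  rewrite gt_max => /andP[/H1 h1 /H2 h2].
  rewrite !gee0_abs ?expeR_ge0 // lee_expeR leeN2.
  move: h1 h2 (vlt z) (ult z); case: (v z) => [w| |] //= h1 w0 _.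
  rewrite lte_fin in w0.
  case: (u z) h1 => [x| |] h1 //= _.
    rewrite lee_fin in h1; rewrite -EFinM lee_fin.
    move: h1; rewrite ler_pdivrMr // => h1.
    have ce : 0 < c * (sigma + e) by apply: mulr_gt0 => //; apply: addr_gt0.
    by rewrite -mulrA ler_pM2l.
  by rewrite mulrNy gtr0_sg // mul1e leNye.
have cv0 : (0 <= c_infty v)%E.
  by apply: le_ereal_inf_tmp => _ [x [x0 _] <-]; rewrite lee_fin ltW.
have cvle : (c_infty v <= (c * sigma)%:E)%E.
  apply/lee_addgt0Pr => e e0; have := key (e / c) (divr_gt0 e0 c0).
  by rewrite mulrDr mulrCA divff ?gt_eqF // mulr1 EFinD.
move: cv0 cvle; case: (c_infty v) => [y| |] //= y0 yle.
rewrite -EFinM lee_fin; rewrite lee_fin in yle.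
by rewrite mulrC ler_pdivrMr // mulrC.
Qed.
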